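(* For every $d\ge 2$, $\dfrac{1}{6d-7}\le p_c^{\operatorname{face}}(d)$.
   Context: A face is a $(d-1)$-dimensional elementary cube in $\mathbb{R}^d$, i.e. a product $I_1\times\cdots\times I_d$ of intervals $[l,l]$ or $[l,l+1]$ ($l\in\mathbb{Z}$) with exactly one degenerate factor. Two faces $Q,Q'$ are adjacent if $Q\cap Q'$ is a $(d-2)$-dimensional elementary cube. In face percolation with parameter $p$, each face is open independently with probability $p$ (product measure $P_p$). $C(Q)$ is the set of open faces connected to $Q$ by chains of successively adjacent open faces, $|C(Q)|$ its cardinality, $Q_0=[0,0]\times[0,1]^{d-1}$, $\theta^{\operatorname{face}}(p)=P_p(|C(Q_0)|=\infty)$, and $p_c^{\operatorname{face}}(d)=\inf\{p:\theta^{\operatorname{face}}(p)>0\}$. *)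

(* Defs.v *)
From HB Require Import structures.
From mathcomp Require Import all_boot all_order all_algebra.
From mathcomp Require Import all_classical all_reals all_analysis.
Set Implicit Arguments. Unset Strict Implicit. Unset Printing Implicit Defensive.
Import Order.TTheory GRing.Theory Num.Theory.
Local Open Scope classical_set_scope.
Local Open Scope ring_scope.

(* The elementary cube  I_1 x ... x I_d  with I_j = [l j, l j + b j]
   (b j = true: nondegenerate interval [l,l+1]; false: degenerate [l,l]). *)
Definition cube_set (R : realType) (d : nat) (l : 'I_d -> int) (b : 'I_d -> bool)
  : set ('I_d -> R) :=
  [set x | forall j, (l j)%:~R <= x j <= (l j + (b j : nat)%:Z)%:~R].

Definition is_elem_cube (R : realType) (d k : nat) (A : set ('I_d -> R)) : Prop :=
  exists (l : 'I_d -> int) (b : 'I_d -> bool),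
    #|[pred j | b j]| = k /\ A = @cube_set R d l b.

(* A face ((d-1)-dim elementary cube) is encoded by (v, i): the cube with
   degenerate factor [v i, v i] in direction i and [v j, v j + 1] for j <> i.
   This encoding is a bijection onto the set of faces. *)
Definition face (d : nat) : Type := ({ffun 'I_d -> int} * 'I_d)%type.

Definition face_set (R : realType) (d : nat) (Q : face d) : set ('I_d -> R) :=
  @cube_set R d (fun j => Q.1 j) (fun j => j != Q.2).

Definition adjacent (R : realType) (d : nat) (Q Q' : face d) : Prop :=
  @is_elem_cube R d (d - 2) (@face_set R d Q `&` @face_set R d Q').

Definition Q0 (d : nat) (hd : (0 < d)%N) : face d := ([ffun => 0%R], Ordinal hd).

Definition cluster (R : realType) (d : nat) (w : face d -> bool) (Q : face d)
  : set (face d) :=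
  [set Q' | exists (n : nat) (g : nat -> face d),
      [/\ g 0%N = Q, g n = Q',
          (forall k, (k <= n)%N -> w (g k)) &
          (forall k, (k < n)%N -> @adjacent R d (g k) (g k.+1))]].

(* omega : face d -> T -> bool is a random configuration on a probability space
   (T, P) whose law is the product measure P_p: the events {face Q is open}
   are measurable, have probability p, and are mutually independent. *)
Definition face_percolation (R : realType) (d : nat) (dT : measure_display)
  (T : measurableType dT) (P : probability T R) (p : R)
  (omega : face d -> T -> bool) : Prop :=
  [/\ (forall Q, measurable [set t | omega Q t]),
      (forall Q, P [set t | omega Q t] = p%:E) &
      (forall s : seq (face d), uniq s ->
         P (\bigcap_(Q in [set` s]) [set t | omega Q t]) = (p ^+ size s)%:E)].

Definition infinite_cluster_event (R : realType) (d : nat) (hd : (0 < d)%N)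
  (T : Type) (omega : face d -> T -> bool) : set T :=
  [set t | infinite_set (@cluster R d (fun Q => omega Q t) (Q0 hd))].

(* Main.v *)
Require Import Defs.
From HB Require Import structures.
From mathcomp Require Import all_boot all_order all_algebra.
From mathcomp Require Import all_classical all_reals all_analysis.
From mathcomp Require Import zify ring lra.
Import Order.TTheory GRing.Theory Num.Theory.
Local Open Scope classical_set_scope.
Local Open Scope ring_scope.
Definition pt (R : realType) {d} (a : 'I_d -> int) : 'I_d -> R := fun j => (a j)%:~R.

Lemma cube_pt (R : realType) d l b a : @cube_set R d l b (pt R a) <->
  (forall j, l j <= a j <= l j + (b j : nat)%:Z).
Proof. by rewrite /cube_set /pt /=; split => H j; have := H j; rewrite !ler_int. Qed.

Lemma face_pt (R : realType) d (Q : face d) a : @face_set R d Q (pt R a) <->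
  (forall j, Q.1 j <= a j <= Q.1 j + ((j != Q.2) : nat)%:Z).
Proof. exact: cube_pt. Qed.

Lemma adj_facts (R : realType) d (Q Q' : face d) : Defs.adjacent R Q Q' ->
  exists (l : 'I_d -> int) (b : 'I_d -> bool),
  [/\ #|[pred j | b j]| = (d - 2)%N,
      forall j, Q.1 j <= l j <= Q.1 j + ((j != Q.2) : nat)%:Z,
      forall j, Q'.1 j <= l j <= Q'.1 j + ((j != Q'.2) : nat)%:Z &
      forall j, b j -> [/\ j != Q.2, j != Q'.2, l j = Q.1 j & l j = Q'.1 j]].
Proof.
case=> l [b [hc hS]]; exists l, b.
have key : forall a, (forall j, l j <= a j <= l j + (b j : nat)%:Z) ->
   (forall j, Q.1 j <= a j <= Q.1 j + ((j != Q.2) : nat)%:Z) /\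
   (forall j, Q'.1 j <= a j <= Q'.1 j + ((j != Q'.2) : nat)%:Z).
  move=> a ha.
  have : (@face_set R d Q `&` @face_set R d Q') (pt R a) by rewrite hS; apply/cube_pt.
  by case => /face_pt h1 /face_pt h2.
have [h1 h2] := key l (fun j => ltac:(case: (b j) => /=; lia)).
split => // j bj.
have ha : forall m, l m <= l m + ((m == j) : nat)%:Z <= l m + (b m : nat)%:Z.
  move=> m; case: (m =P j) => [->|_] /=; first by rewrite bj /=; lia.
  case: (b m) => /=; lia.
have [h3 h4] := key _ ha.
have := h3 j; have := h4 j; have := h1 j; have := h2 j; rewrite eqxx /=.
case: (j == Q.2); case: (j == Q'.2) => /=.
all: move=> /andP[? ?] /andP[? ?] /andP[? ?] /andP[? ?]; try (exfalso; lia).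
split => //; lia.
Qed.

Definition sh {d} (v : {ffun 'I_d -> int}) (k : 'I_d) (a : int) : {ffun 'I_d -> int} :=
  [ffun j => v j + (if j == k then a else 0)].

Definition nb6 {d} (Q : face d) (k : 'I_d) : seq (face d) :=
  [:: (sh Q.1 k 1, Q.2); (sh Q.1 k (-1), Q.2); (Q.1, k); (sh Q.1 k 1, k);
      (sh Q.1 Q.2 (-1), k); (sh (sh Q.1 Q.2 (-1)) k 1, k)].

Definition nbrs {d} (Q : face d) : seq (face d) :=
  Q :: flatten [seq nb6 Q k | k <- enum 'I_d & k != Q.2].

Lemma mem_nb6 d (Q : face d) k x : k != Q.2 -> x \in nb6 Q k -> x \in nbrs Q.
Proof.
move=> hk hx; rewrite inE; apply/orP; right; apply/flatten_mapP; exists k => //.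
by rewrite mem_filter hk mem_enum.
Qed.

Lemma card2_three (T : finType) (A : pred T) x y z : #|A| = 2%N ->
  A x -> A y -> A z -> x != y -> x != z -> y != z -> False.
Proof.
move=> hA ax ay az xy xz yz.
have : (#|[:: x; y; z]| <= #|A|)%N.
  apply: subset_leq_card; apply/fintype.subsetP => u; rewrite !inE.
  by case/or3P => /eqP ->.
rewrite hA; have /card_uniqP -> : uniq [:: x; y; z] by rewrite /= !inE negb_or xy xz yz.
by [].
Qed.

Lemma adj_nbrs (R : realType) d (Q Q' : face d) : (2 <= d)%N ->
  Defs.adjacent R Q Q' -> Q' \in nbrs Q.
Proof.
move=> hd /adj_facts [l [b [hc h1 h2 h3]]].
case: Q h1 h3 => v i h1; case: Q' h2 => v' i' h2 /= h3 /=.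
have hC : #|[predC [pred j | b j]]| = 2%N.
  have := cardC [pred j | b j]; rewrite hc card_ord => h.
  by apply/eqP; rewrite -(eqn_add2l (d - 2)) h; apply/eqP; lia.
have nbi : ~~ b i by apply/negP => /h3 [/eqP].
have nbi' : ~~ b i' by apply/negP => /h3 [_ /eqP].
case: (i' =P i) => [ei|nei].
  subst i'.
  have [k /andP [hk1 hk2] | none] := pickP [pred k | (k != i) && ~~ b k]; last first.
    exfalso.
    have : (#|[predC [pred j | b j]]| <= #|pred1 i|)%N.
      apply: subset_leq_card; apply/fintype.subsetP => u; rewrite !inE.
      by move=> hu; apply/negPn/negP => hui; have := none u; rewrite /= hui hu.
    by rewrite hC card1.
  have bo : forall j, j != i -> j != k -> b j.
    move=> j ji jk; apply/negPn/negP => nbj.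
    apply: (@card2_three _ [predC [pred j | b j]] i k j hC) => //; by rewrite eq_sym.
  have hv : forall j, v' j = v j + (if j == k then v' k - v k else 0).
    move=> j; case: (j =P k) => [->|/eqP jk]; first by rewrite addrC subrK.
    rewrite addr0; case: (j =P i) => [->|/eqP ji].
      by have := h1 i; have := h2 i; rewrite eqxx /=; lia.
    by have [_ _ <- <-] := h3 j (bo j ji jk).
  have : v' k - v k = 1 \/ v' k - v k = -1 \/ v' k - v k = 0.
    by have := h1 k; have := h2 k; rewrite hk1 /=; lia.
  case=> [ha|[ha|ha]]; rewrite ha in hv.
  - have -> : v' = sh v k 1 by apply/ffunP => j; rewrite hv ffunE.
    by apply: (@mem_nb6 d (v, i) k) => //; rewrite !inE eqxx.
  - have -> : v' = sh v k (-1) by apply/ffunP => j; rewrite hv ffunE.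
    by apply: (@mem_nb6 d (v, i) k) => //; rewrite !inE eqxx ?orbT.
  - have -> : v' = v by apply/ffunP => j; rewrite hv if_same addr0.
    exact: mem_head.
have bo : forall j, j != i -> j != i' -> b j.
  move=> j ji ji'; apply/negPn/negP => nbj.
  apply: (@card2_three _ [predC [pred j | b j]] i i' j hC) => //.
  - by apply/eqP => e; apply: nei; rewrite e.
  - by rewrite eq_sym.
  - by rewrite eq_sym.
have hv : forall j, v' j = v j + (if j == i then v' i - v i else 0)
                          + (if j == i' then v' i' - v i' else 0).
  move=> j; case: (j =P i) => [->|/eqP ji].
    have -> : (i == i') = false by apply/eqP => /esym.
    by rewrite addr0 addrC subrK.
  case: (j =P i') => [->|/eqP ji']; first by rewrite addr0 addrC subrK.
  by rewrite !addr0; have [_ _ <- <-] := h3 j (bo j ji ji').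
have hi'i : i' != i by apply/eqP.
have ha : v' i - v i = 0 \/ v' i - v i = -1.
  by have := h1 i; have := h2 i; rewrite eqxx eq_sym (negbTE hi'i) /=; lia.
have hc' : v' i' - v i' = 0 \/ v' i' - v i' = 1.
  by have := h1 i'; have := h2 i'; rewrite eqxx hi'i /=; lia.
apply: (@mem_nb6 d (v, i) i' _ hi'i).
case: ha => ha; case: hc' => hc'; rewrite ha hc' in hv.
- have -> : v' = v by apply/ffunP => j; rewrite hv !if_same !addr0.
  by rewrite !inE eqxx ?orbT.
- have -> : v' = sh v i' 1 by apply/ffunP => j; rewrite hv if_same addr0 ffunE.
  by rewrite !inE eqxx ?orbT.
- have -> : v' = sh v i (-1) by apply/ffunP => j; rewrite hv if_same addr0 ffunE.
  by rewrite !inE eqxx ?orbT.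
- have -> : v' = sh (sh v i (-1)) i' 1 by apply/ffunP => j; rewrite hv !ffunE.
  by rewrite !inE eqxx ?orbT.
Qed.

Lemma size_filter_neq d (i : 'I_d) : size [seq k <- enum 'I_d | k != i] = d.-1.
Proof. have -> : d.-1 = #|predC1 i| by rewrite cardC1 card_ord.
by rewrite cardE /enum_mem !size_filter count_filter; apply: eq_count => k; rewrite !inE andbT. Qed.

Lemma size_flatten_le (T : eqType) U (f : T -> seq U) s c :
  (forall x, x \in s -> (size (f x) <= c)%N) -> (size (flatten (map f s)) <= c * size s)%N.
Proof.
elim: s => [|x s IH] H //=.
rewrite size_cat mulnS leq_add //; first by apply: H; rewrite mem_head.
by apply: IH => y ys; apply: H; rewrite inE ys orbT.
Qed.

Lemma size_nbrs d (Q : face d) : (size (nbrs Q) <= 6 * d - 5)%N.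
Proof.
rewrite /nbrs /=.
have := @size_flatten_le _ _ (nb6 Q) [seq k <- enum 'I_d | k != Q.2] 6 (fun _ _ => leqnn _).
rewrite size_filter_neq.
case: d Q => [|d] Q; first by case: Q.2 => //.
move=> h; apply: (leq_ltn_trans h); lia.
Qed.

Lemma adj_sym (R : realType) d (Q Q' : face d) :
  Defs.adjacent R Q Q' -> Defs.adjacent R Q' Q.
Proof. by rewrite /Defs.adjacent setIC. Qed.

Definition ext (R : realType) {d} (q0 : face d) (g : seq (face d)) : seq (seq (face d)) :=
  [seq rcons g Q' | Q' <- nbrs (last q0 g) &
     `[< Defs.adjacent R (last q0 g) Q' >] && (Q' \notin g)].

Fixpoint LL (R : realType) {d} (q0 : face d) (n : nat) : seq (seq (face d)) :=
  match n with
  | 0 => [:: [:: q0]]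
  | n.+1 => flatten (map (ext R q0) (LL R q0 n))
  end.

Definition achain (R : realType) {d} (g : nat -> face d) (n : nat) : Prop :=
  forall k, (k < n)%N -> Defs.adjacent R (g k) (g k.+1).

Lemma LL_inv (R : realType) d (q0 : face d) n g : g \in LL R q0 n ->
  [/\ size g = n.+1, uniq g, nth q0 g 0 = q0 & achain R (nth q0 g) n].
Proof.
elim: n g => [|n IH] g /=.
  by rewrite inE => /eqP ->; split => // k.
case/flatten_mapP => h /IH [hs hu h0 ha] /mapP [Q'].
rewrite mem_filter => /andP [/andP [/asboolP hadj hnot] _] ->.
have hl : last q0 h = nth q0 h n by rewrite -nth_last hs.
split.
- by rewrite size_rcons hs.
- by rewrite rcons_uniq hnot hu.
- by rewrite nth_rcons hs.
- move=> k hk; rewrite !nth_rcons hs.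
  case: (ltngtP k.+1 n.+1) => hk'.
  + by apply: ha; lia.
  + lia.
  + have ek : k = n by lia.
    by subst k; rewrite -hl.
Qed.

Lemma LL_map (R : realType) d (q0 : face d) (g : nat -> face d) n : (2 <= d)%N ->
  g 0%N = q0 -> achain R g n ->
  (forall a b, (a <= n)%N -> (b <= n)%N -> g a = g b -> a = b) ->
  map g (iota 0 n.+1) \in LL R q0 n.
Proof.
move=> hd g0; elim: n => [|n IH] ha hi; first by rewrite /= g0 mem_seq1.
rewrite [X in _ \in X]/=.
have hpre : map g (iota 0 n.+1) \in LL R q0 n.
  apply: IH; first by move=> k hk; apply: ha; lia.
  by move=> a b ha' hb'; apply: hi; lia.
apply/flatten_mapP; exists (map g (iota 0 n.+1)) => //.
have hl : last q0 (map g (iota 0 n.+1)) = g n.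
  by rewrite -addn1 iotaD map_cat last_cat.
have -> : iota 0 n.+2 = iota 0 n.+1 ++ [:: n.+1] by rewrite -[n.+2]addn1 iotaD.
rewrite map_cat cats1; apply/mapP; exists (g n.+1) => //.
rewrite mem_filter hl; apply/andP; split; [apply/andP; split|].
- by apply/asboolP; apply: ha.
- apply/negP => /mapP [k]; rewrite mem_iota => /andP [_ hk] e.
  have := hi _ _ (leqnn _) _ e; lia.
- by apply: adj_nbrs hd (ha n _).
Qed.

Lemma LL_size (R : realType) d (q0 : face d) n : (2 <= d)%N ->
  (size (LL R q0 n) <= (6 * d - 5) * (6 * d - 7) ^ n)%N.
Proof.
move=> hd.
have hN : forall n g, g \in LL R q0 n.+1 -> (size (ext R q0 g) <= 6 * d - 7)%N.
  move=> {}n g /LL_inv [hs hu h0 ha].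
  rewrite size_map size_filter.
  set N := nbrs (last q0 g).
  set P := (fun Q' => _).
  have h1 : (count P N + count (mem g) N <= size N)%N.
    rewrite -count_predUI.
    have -> : count (predI P (mem g)) N = 0%N.
      apply/eqP; rewrite -leqn0 leqNgt -has_count; apply/hasPn => x _.
      by rewrite /P /=; case: (x \in g); rewrite ?andbF ?andbT.
    by rewrite addn0 count_size.
  have hlast : last q0 g = nth q0 g n.+1 by rewrite -nth_last hs.
  have hne : nth q0 g n.+1 != nth q0 g n.
    by rewrite nth_uniq // ?hs; lia.
  have h2 : (2 <= count (mem g) N)%N.
    apply: (@leq_trans (count (predU (pred1 (nth q0 g n.+1)) (pred1 (nth q0 g n))) N)).
      have hI0 : count (predI (pred1 (nth q0 g n.+1)) (pred1 (nth q0 g n))) N = 0%N.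
        apply/eqP; rewrite -leqn0 leqNgt -has_count; apply/hasPn => x _ /=.
        by apply/negP => /andP [/eqP -> /eqP e]; move: hne; rewrite e eqxx.
      have hU := count_predUI (pred1 (nth q0 g n.+1)) (pred1 (nth q0 g n)) N.
      rewrite hI0 addn0 in hU; rewrite hU.
      have c1 : forall x, x \in N -> (0 < count (pred1 x) N)%N.
        by move=> x hx; rewrite -has_count has_pred1.
      have := c1 (nth q0 g n.+1); have := c1 (nth q0 g n).
      rewrite /N hlast mem_head.
      have -> : nth q0 g n \in nbrs (nth q0 g n.+1).
        by apply: adj_nbrs hd _; apply: adj_sym; apply: ha.
      move=> /(_ isT) ha' /(_ isT) hb'; lia.
    apply: sub_count => x /= /orP [] /eqP ->; apply: mem_nth; rewrite hs; lia.
  have := @size_nbrs d (last q0 g); rewrite -/N; lia.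
elim: n => [|n IH] /=.
  rewrite expn0 muln1; lia.
case: n IH => [|n] IH.
  apply: (leq_trans (@size_flatten_le _ _ (ext R q0) (LL R q0 0) (6 * d - 5) _)).
    by move=> g _; rewrite size_map size_filter (leq_trans (count_size _ _)) // size_nbrs.
  have : (5 <= 6 * d - 7)%N by lia.
  rewrite /= expn1 muln1 => h5; rewrite -[X in (X <= _)%N]muln1 leq_mul //; lia.
apply: (leq_trans (@size_flatten_le _ _ (ext R q0) (LL R q0 n.+1) (6 * d - 7) (hN n))).
rewrite expnS mulnCA leq_mul2l; apply/orP; right; exact: IH.
Qed.

Fixpoint reach {d} (q0 : face d) (n : nat) : seq (face d) :=
  match n with
  | 0 => [:: q0]
  | n.+1 => reach q0 n ++ flatten (map nbrs (reach q0 n))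
  end.

Lemma reach_mono d (q0 : face d) k n x : (k <= n)%N -> x \in reach q0 k -> x \in reach q0 n.
Proof.
elim: n => [|n IH] hk hx; first by move: hk hx; rewrite leqn0 => /eqP ->.
case: (leqP k n) => h; first by rewrite /= mem_cat IH.
have ek : k = n.+1 by lia.
by move: hx; rewrite ek.
Qed.

Lemma chain_reach (R : realType) d (q0 : face d) g m : (2 <= d)%N ->
  g 0%N = q0 -> achain R g m -> forall k, (k <= m)%N -> g k \in reach q0 k.
Proof.
move=> hd g0 ha; elim => [|k IH] hk; first by rewrite g0 mem_head.
rewrite /= mem_cat; apply/orP; right; apply/flatten_mapP; exists (g k).
  by apply: IH; lia.
by apply: adj_nbrs hd (ha k hk).
Qed.

Lemma shortcut (R : realType) d (w : face d -> bool) (g : nat -> face d) m a b :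
  (a < b)%N -> (b <= m)%N -> g a = g b -> (forall k, (k <= m)%N -> w (g k)) ->
  achain R g m ->
  let g' := fun k => if (k <= a)%N then g k else g (k + (b - a))%N in
  [/\ g' 0%N = g 0%N, g' (m - (b - a))%N = g m,
      forall k, (k <= m - (b - a))%N -> w (g' k) & achain R g' (m - (b - a))].
Proof.
move=> hab hbm e hw ha g'; split.
- by rewrite /g' leq0n.
- rewrite /g'; case: (leqP (m - (b - a)) a) => h.
  + have -> : (m - (b - a))%N = a by lia.
    by rewrite e; have -> : b = m by lia.
  + by have -> : (m - (b - a) + (b - a))%N = m by lia.
- move=> k hk; rewrite /g'; case: (leqP k a) => h; apply: hw; lia.
- move=> k hk; rewrite /g'; case: (leqP k.+1 a) => h1; case: (leqP k a) => h2.
  + by apply: ha; lia.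
  + lia.
  + have ek : k = a by lia.
    subst k; rewrite e; have -> : (a.+1 + (b - a))%N = b.+1 by lia.
    by apply: ha; lia.
  + have -> : (k.+1 + (b - a))%N = (k + (b - a)).+1 by lia.
    by apply: ha; lia.
Qed.

Lemma inf_chain (R : realType) d (q0 : face d) (w : face d -> bool) n : (2 <= d)%N ->
  infinite_set (@Defs.cluster R d w q0) ->
  exists g : nat -> face d, [/\ g 0%N = q0, achain R g n,
     (forall k, (k <= n)%N -> w (g k)) &
     (forall a b, (a <= n)%N -> (b <= n)%N -> g a = g b -> a = b)].
Proof.
move=> hd hinf.
have [Q' [hC hR]] : exists Q', Defs.cluster R w q0 Q' /\ Q' \notin reach q0 n.
  apply: contrapT => hno; apply: hinf.
  apply: (sub_finite_set _ (finite_seq (reach q0 n))) => Q' hQ' /=.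
  by apply/negPn/negP => hn; apply: hno; exists Q'.
pose Pm := fun m => `[< exists g : nat -> face d, [/\ g 0%N = q0, g m = Q',
   (forall k, (k <= m)%N -> w (g k)) & achain R g m] >].
have hex : exists m, Pm m.
  case: hC => m [g [h0 hm hw ha]]; exists m; apply/asboolP; exists g; split => //.
case: (ex_minnP hex) => m /asboolP [g [h0 hm hw ha]] hmin.
have hinj : forall a b, (a <= m)%N -> (b <= m)%N -> g a = g b -> a = b.
  have key : forall a b, (a < b)%N -> (b <= m)%N -> g a = g b -> False.
    move=> a b hab hbm e.
    have [h1 h2 h3 h4] := @shortcut R d w g m a b hab hbm e hw ha.
    have : Pm (m - (b - a))%N.
      apply/asboolP; exists (fun k => if (k <= a)%N then g k else g (k + (b - a))%N).
      by split => //; rewrite h2.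
    move/hmin; lia.
  move=> a b ha' hb' e; case: (ltngtP a b) => h //.
    by exfalso; apply: (key a b h hb' e).
  by exfalso; apply: (key b a h ha' (esym e)).
have hmn : (n < m)%N.
  rewrite ltnNge; apply/negP => hmn; move: hR; rewrite -hm => /negP; apply.
  by apply: (@reach_mono d q0 m n _ hmn); apply: (@chain_reach R d q0 g m hd h0 ha m (leqnn m)).
exists g; split => //.
- by move=> k hk; apply: ha; lia.
- by move=> k hk; apply: hw; lia.
- by move=> a b ha' hb'; apply: hinj; lia.
Qed.

Lemma ex_small (R : realType) (q e : R) : 0 <= q -> q < 1 -> 0 < e -> exists n, q ^+ n < e.
Proof.
move=> q0 q1 e0.
have h := @cvg_expr R q (ltac:(by rewrite ger0_norm)).
have := @cvgr_dist_lt _ _ _ _ _ _ _ h _ e0.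
case=> N _ HN; exists N; have := HN N (leqnn N).
rewrite sub0r normrN ger0_norm //; exact: exprn_ge0.
Qed.

Lemma final_ineq (R : realType) (K r y x : R) : 0 <= K -> 0 <= r -> r < y ->
  y * (K + 1) = x -> x <= K * r -> False.
Proof. move=> *; nra. Qed.

Theorem proposition2p9 (d : nat) (hd : (2 <= d)%N) (R : realType)
  (dT : measure_display) (T : measurableType dT) (P : probability T R) (p : R)
  (omega : face d -> T -> bool) :
  face_percolation P p omega ->
  (0 < P (infinite_cluster_event R (ltnW hd) omega))%E ->
  1 / ((6 * d)%:R - 7) <= p.
Proof.
move=> [hmeas hprob hind] hpos.
set q := Q0 (ltnW hd).
pose F := fun g : seq (face d) => \bigcap_(Q in [set` g]) [set t | omega Q t].
pose E := fun n => \big[setU/set0]_(i < size (LL R q n)) F (nth [::] (LL R q n) i).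
have hFm : forall g, measurable (F g).
  move=> g; apply: fin_bigcap_measurable; first exact: finite_seq.
  by move=> Q _; exact: hmeas.
have hEm : forall n, measurable (E n).
  by move=> n; apply: bigsetU_measurable => i _; exact: hFm.
have hFP : forall n g, g \in LL R q n -> P (F g) = (p ^+ n.+1)%:E.
  by move=> n g /LL_inv [hs hu _ _]; rewrite /F hind // hs.
have hEP : forall n, (P (E n) <= ((size (LL R q n))%:R * p ^+ n.+1)%:E)%E.
  move=> n.
  apply: le_trans (@Boole_inequality _ _ _ P (fun i => F (nth [::] (LL R q n) i))
     (size (LL R q n)) (fun i _ => hFm _)) _.
  rewrite (eq_bigr (fun _ => (p ^+ n.+1)%:E)); last first.
    by move=> i _; apply: hFP; apply: mem_nth.
  by rewrite sumEFin big_const_ord iter_addr addr0 mulr_natl.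
have hEq : infinite_cluster_event R (ltnW hd) omega = \bigcap_n E n.
  apply/seteqP; split => t.
  - move=> hinf n _.
    have [g [g0 ha hw hi]] := @inf_chain R d q (fun Q => omega Q t) n hd hinf.
    have hm := @LL_map R d q g n hd g0 ha hi.
    rewrite /E -(bigcup_mkord _ (fun i => F (nth [::] (LL R q n) i))).
    exists (index (map g (iota 0 n.+1)) (LL R q n)); first by rewrite /= index_mem.
    rewrite nth_index // => Q hQ; have /mapP [k] : Q \in map g (iota 0 n.+1) := hQ.
    rewrite mem_iota => /andP [_ hk] ->.
    by apply: hw; lia.
  - move=> hall; rewrite /infinite_cluster_event /= => /finite_seqP [s hs].
    have := hall (size s) I; rewrite /E -(bigcup_mkord _ (fun i => F (nth [::] (LL R q (size s)) i))) => -[i hi hFi].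
    set g := nth [::] (LL R q (size s)) i in hFi.
    have hg : g \in LL R q (size s) by apply: mem_nth.
    have [hsz hu h0 ha] := @LL_inv R d q (size s) g hg.
    have hsub : {subset g <= s}.
      move=> Q hQ.
      have : Defs.cluster R (fun Q => omega Q t) q Q.
        exists (index Q g), (nth q g); split.
        + exact: h0.
        + exact: nth_index.
        + move=> k hk; apply: hFi; rewrite /=; apply: mem_nth.
          by have := index_mem Q g; rewrite hQ; lia.
        + move=> k hk; apply: ha.
          by have := index_mem Q g; rewrite hQ hsz; lia.
      by rewrite hs.
    have := uniq_leq_size hu hsub; rewrite hsz; lia.
have hInfm : measurable (infinite_cluster_event R (ltnW hd) omega).
  by rewrite hEq; apply: bigcapT_measurable.
have hle : forall n, (P (infinite_cluster_event R (ltnW hd) omega) <=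
    ((size (LL R q n))%:R * p ^+ n.+1)%:E)%E.
  move=> n; apply: le_trans (hEP n); apply: le_measure; rewrite ?inE //.
  by rewrite hEq => t /(_ n I).
have p0 : 0 <= p.
  have h0 : (0 <= P [set t | omega q t])%E by apply: measure_ge0.
  by move: h0; rewrite hprob lee_fin.
rewrite leNgt; apply/negP => hp.
have hc : ((6 * d - 7)%N%:R : R) = (6 * d)%:R - 7 by rewrite natrB //; lia.
set c := (6 * d)%:R - 7 in hp hc.
have c0 : 0 < c by rewrite -hc ltr0n; lia.
have cn0 : c != 0 by rewrite gt_eqF.
have hq1 : c * p < 1.
  by have := hp; rewrite -(ltr_pM2l c0) mul1r mulfV.
set K := (6 * d - 5)%N%:R * p.
have K0 : 0 <= K by apply: mulr_ge0.
have hbound : forall n, (P (infinite_cluster_event R (ltnW hd) omega) <=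
    (K * (c * p) ^+ n)%:E)%E.
  move=> n; apply: le_trans (hle n) _; rewrite lee_fin.
  have -> : K * (c * p) ^+ n = ((6 * d - 5) * (6 * d - 7) ^ n)%N%:R * p ^+ n.+1.
    by rewrite natrM natrX hc /K exprMn exprS; ring.
  apply: ler_wpM2r; first exact: exprn_ge0.
  by rewrite ler_nat; apply: LL_size.
move: hpos hbound; move: (P (infinite_cluster_event R (ltnW hd) omega)) => [x| |] //=.
- rewrite lte_fin => hx hb.
  have cp0 : 0 <= c * p by apply: mulr_ge0 => //; apply: ltW.
  have K1 : 0 < K + 1 by lra.
  have [n hn] := @ex_small R (c * p) (x / (K + 1)) cp0 hq1 (divr_gt0 hx K1).
  have := hb n; rewrite lee_fin.
  set r := (c * p) ^+ n in hn *.
  have r0 : 0 <= r by apply: exprn_ge0.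
  set y := x / (K + 1) in hn.
  have hy : y * (K + 1) = x by rewrite /y divfK // gt_eqF.
  move=> hxr; exact: (@final_ineq R K r y x K0 r0 hn hy hxr).
- by move=> _ /(_ 0%N).
Qed.
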